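(* For every integer $m\ge3$, \[ \sum_{n=1}^{\infty}\frac{h_n^{(2)}}{n^{m}}=\sum_{n=1}^{\infty}H_n\,\zeta(m,n)=\zeta_H(m-1)+\zeta_H(m)-\zeta(m-1). \]
   Context: Hyperharmonic numbers: $h_n^{(0)}=1/n$ for $n\ge1$, and for $r\ge1$, $h_n^{(r)}=\sum_{j=1}^{n}h_j^{(r-1)}$. $H_n=\sum_{j=1}^n 1/j$. $\zeta$ is the Riemann zeta function, $\zeta(s,a)=\sum_{j=0}^\infty (j+a)^{-s}$ the Hurwitz zeta function, and $\zeta_H(s)=\sum_{n=1}^{\infty}H_n/n^{s}$ for integers $s\ge2$. *)

(* Defs.v *)
From Stdlib Require Import Reals.
Open Scope R_scope.

Fixpoint sum1 (f : nat -> R) (n : nat) : R :=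
  match n with
  | O => 0
  | S k => sum1 f k + f (S k)
  end.

(* Hyperharmonic numbers h_n^{(r)} (only meaningful for n >= 1):
   h_n^{(0)} = 1/n, h_n^{(r)} = sum_{j=1}^n h_j^{(r-1)}. *)
Fixpoint hyperharmonic (r n : nat) : R :=
  match r with
  | O => / INR n
  | S r' => sum1 (fun j => hyperharmonic r' j) n
  end.

Definition harmonic (n : nat) : R := sum1 (fun j => / INR j) n.

Definition is_zeta (s : nat) (z : R) : Prop :=
  infinite_sum (fun k => / (INR (S k)) ^ s) z.

Definition is_hurwitz_zeta (s : nat) (a : R) (z : R) : Prop :=
  infinite_sum (fun j => / (INR j + a) ^ s) z.

Definition is_zetaH (s : nat) (z : R) : Prop :=
  infinite_sum (fun k => harmonic (S k) / (INR (S k)) ^ s) z.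

(* Main.v *)
Require Import Defs.
From Stdlib Require Import Reals Lra Lia.
Open Scope R_scope.

Lemma conv_bounded (a : nat -> R) (M : R) :
  (forall n, 0 <= a n) -> (forall n, sum_f_R0 a n <= M) ->
  exists l, infinite_sum a l.
Proof.
  intros Ha HM.
  destruct (growing_cv (sum_f_R0 a)) as [l Hl].
  - intro n; simpl; specialize (Ha (S n)); lra.
  - exists M; intros x [i ->]; apply HM.
  - exists l; exact Hl.
Qed.

Lemma lim_le (u v : nat -> R) (a b : R) (N : nat) :
  Un_cv u a -> Un_cv v b -> (forall n, (N <= n)%nat -> u n <= v n) -> a <= b.
Proof.
  intros Hu Hv H.
  destruct (Rle_or_lt a b) as [h|h]; [exact h|exfalso].
  assert (e : (a - b)/2 > 0) by lra.
  destruct (Hu _ e) as [N1 H1]. destruct (Hv _ e) as [N2 H2].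
  set (K := (N + N1 + N2)%nat).
  specialize (H1 K ltac:(unfold K; lia)). specialize (H2 K ltac:(unfold K; lia)).
  specialize (H K ltac:(unfold K; lia)).
  unfold Rdist in *. apply Rabs_def2 in H1. apply Rabs_def2 in H2. lra.
Qed.

Lemma harm_S n : harmonic (S n) = harmonic n + / INR (S n).
Proof. reflexivity. Qed.

Lemma harm_ge0 n : 0 <= harmonic n.
Proof.
  induction n; [unfold harmonic; simpl; lra|]. rewrite harm_S.
  assert (0 < / INR (S n)) by (apply Rinv_0_lt_compat, lt_0_INR; lia). lra.
Qed.

Lemma harm_ge1 n : 1 <= harmonic (S n).
Proof.
  induction n. - unfold harmonic; simpl; rewrite Rinv_1; lra.
  - rewrite harm_S. assert (0 < / INR (S (S n))) by (apply Rinv_0_lt_compat, lt_0_INR; lia). lra.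
Qed.

Lemma hyp2_S n : hyperharmonic 2 (S n) = hyperharmonic 2 n + harmonic (S n).
Proof. reflexivity. Qed.

Lemma hyp2_formula n : hyperharmonic 2 n = (INR n + 1) * harmonic n - INR n.
Proof.
  induction n. - simpl; unfold harmonic; simpl; lra.
  - rewrite hyp2_S, IHn, !harm_S, S_INR.
    assert (0 < INR n + 1) by (pose proof (pos_INR n); lra).
    field. lra.
Qed.

Lemma hyp2_ge0 n : 0 <= hyperharmonic 2 n.
Proof.
  induction n; [simpl; lra|]. rewrite hyp2_S. pose proof (harm_ge0 (S n)); lra.
Qed.

Lemma key_ineq (x H : R) : 1 <= x -> 0 <= H ->
  H / (x*x) <= 2*(H+2)/x - 2*(H + /(x+1) + 2)/(x+1).
Proof.
  intros hx hH.
  assert (E : 2*(H+2)/x - 2*(H + /(x+1) + 2)/(x+1) - H/(x*x)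
     = (H*(x*x-1) + 2*x*x + 4*x) / (x*x*((x+1)*(x+1)))) by (field; lra).
  assert (0 <= (H*(x*x-1) + 2*x*x + 4*x) / (x*x*((x+1)*(x+1)))).
  { assert (0 <= x*x-1) by nra. assert (0 <= H*(x*x-1)) by (apply Rmult_le_pos; lra).
    unfold Rdiv; apply Rmult_le_pos; [nra|]. left; apply Rinv_0_lt_compat. assert (0 < x*x) by nra. assert (0<(x+1)*(x+1)) by nra. nra. }
  lra.
Qed.

Definition fH n := 2*(harmonic n + 2)/INR n.

Lemma zetaH2_bound n :
  sum_f_R0 (fun k => harmonic (S k) / (INR (S k) * INR (S k))) n <= 6 - fH (S (S n)).
Proof.
  induction n.
  - simpl sum_f_R0. unfold fH. rewrite !harm_S. unfold harmonic; simpl sum1.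
    replace (INR 2) with 2 by (simpl; lra). replace (INR 1) with 1 by (simpl; lra).
    field_simplify; lra.
  - cbn [sum_f_R0].
    pose proof (key_ineq (INR (S (S n))) (harmonic (S (S n)))) as K.
    assert (1 <= INR (S (S n))) by (rewrite S_INR; pose proof (pos_INR (S n)); lra).
    specialize (K H (harm_ge0 _)).
    unfold fH in *. rewrite (harm_S (S (S n))). rewrite (S_INR (S (S n))).
    lra.
Qed.
Lemma pow_bound (x H : R) (s : nat) : (2 <= s)%nat -> 1 <= x -> 0 <= H ->
  H / x ^ s <= H / (x*x).
Proof.
  intros hs hx hH. unfold Rdiv. apply Rmult_le_compat_l; [exact hH|].
  apply Rinv_le_contravar; [nra|].
  replace (x*x) with (x^2) by ring. apply Rle_pow; assumption.
Qed.

Lemma INRS_ge1 k : 1 <= INR (S k).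
Proof. rewrite S_INR; pose proof (pos_INR k); lra. Qed.

Lemma zetaH_term_bound s k : (2 <= s)%nat ->
  0 <= harmonic (S k) / INR (S k) ^ s <= harmonic (S k) / (INR (S k) * INR (S k)).
Proof.
  intros hs. split.
  - unfold Rdiv. apply Rmult_le_pos; [apply harm_ge0|]. left; apply Rinv_0_lt_compat, pow_lt.
    pose proof (INRS_ge1 k); lra.
  - apply pow_bound; [exact hs|apply INRS_ge1|apply harm_ge0].
Qed.

Lemma fH_pos n : 0 <= fH (S n).
Proof.
  unfold fH. pose proof (harm_ge0 (S n)). pose proof (INRS_ge1 n).
  unfold Rdiv. apply Rmult_le_pos; [lra|]. left; apply Rinv_0_lt_compat; lra.
Qed.

Lemma zetaH_conv s : (2 <= s)%nat -> exists z, is_zetaH s z.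
Proof.
  intros hs. apply (conv_bounded _ 6).
  - intro n; apply (zetaH_term_bound s n hs).
  - intro n. eapply Rle_trans.
    + apply sum_Rle. intros k _. apply (zetaH_term_bound s k hs).
    + pose proof (zetaH2_bound n). pose proof (fH_pos (S n)). lra.
Qed.

Lemma zeta_conv s : (2 <= s)%nat -> exists z, is_zeta s z.
Proof.
  intros hs. apply (conv_bounded _ 6).
  - intro n; left; apply Rinv_0_lt_compat, pow_lt. pose proof (INRS_ge1 n); lra.
  - intro n. eapply Rle_trans.
    + apply sum_Rle. intros k _.
      assert (0 < INR (S k) ^ s) by (apply pow_lt; pose proof (INRS_ge1 k); lra).
      pose proof (harm_ge1 k).
      assert (/ INR (S k) ^ s <= harmonic (S k) / INR (S k) ^ s).
      { unfold Rdiv. rewrite <- (Rmult_1_l (/ _)) at 1. apply Rmult_le_compat_r; [|lra].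
        left; apply Rinv_0_lt_compat; lra. }
      eapply Rle_trans; [exact H1|]. apply (zetaH_term_bound s k hs).
    + pose proof (zetaH2_bound n). pose proof (fH_pos (S n)). lra.
Qed.

Lemma sum_f_sum1 (g : nat -> R) n : sum_f_R0 (fun k => g (S k)) n = sum1 g (S n).
Proof. induction n; [simpl; ring|]. rewrite tech5, IHn. reflexivity. Qed.

Lemma sum_shift (g : nat -> R) p k :
  sum_f_R0 (fun j => g (j + S p)%nat) k = sum1 g (S k + p) - sum1 g p.
Proof.
  induction k.
  - simpl. ring.
  - rewrite tech5, IHk. replace (S (S k) + p)%nat with (S (S k + p)) by lia.
    replace (S k + S p)%nat with (S (S k + p)) by lia. simpl. ring.
Qed.

Lemma cv_const c : Un_cv (fun _ => c) c.
Proof. intros e he; exists O; intros; unfold Rdist; rewrite Rminus_diag, Rabs_R0; lra. Qed.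

Lemma hyp2_mono n d : hyperharmonic 2 n <= hyperharmonic 2 (n + d).
Proof.
  induction d. - rewrite Nat.add_0_r; lra.
  - replace (n + S d)%nat with (S (n + d)) by lia. rewrite hyp2_S.
    pose proof (harm_ge0 (S (n+d))). lra.
Qed.

Theorem mainTheorem3 (m : nat) (hm : (3 <= m)%nat) :
  exists (Ssum : R) (Z : nat -> R) (zH1 zH0 z1 : R),
    (forall n : nat, (1 <= n)%nat -> is_hurwitz_zeta m (INR n) (Z n)) /\
    infinite_sum (fun k => hyperharmonic 2 (S k) / (INR (S k)) ^ m) Ssum /\
    infinite_sum (fun k => harmonic (S k) * Z (S k)) Ssum /\
    is_zetaH (m - 1) zH1 /\
    is_zetaH m zH0 /\
    is_zeta (m - 1) z1 /\
    Ssum = zH1 + zH0 - z1.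
Proof.
  destruct (zetaH_conv (m-1) ltac:(lia)) as [zH1 HzH1].
  destruct (zetaH_conv m ltac:(lia)) as [zH0 HzH0].
  destruct (zeta_conv (m-1) ltac:(lia)) as [z1 Hz1].
  destruct (zeta_conv m ltac:(lia)) as [z Hz].
  set (g := fun j : nat => / INR j ^ m).
  set (A := hyperharmonic 2).
  set (Q := sum_f_R0 (fun k => A (S k) / INR (S k) ^ m)).
  set (S0 := zH1 + zH0 - z1).
  assert (HQ : Un_cv Q S0).
  { unfold Q, S0.
    assert (E : forall N, sum_f_R0 (fun k => A (S k) / INR (S k) ^ m) N =
       sum_f_R0 (fun k => harmonic (S k) / INR (S k) ^ (m-1)) N
       + sum_f_R0 (fun k => harmonic (S k) / INR (S k) ^ m) N
       - sum_f_R0 (fun k => / INR (S k) ^ (m-1)) N).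
    { intro N. rewrite <- sum_plus, <- minus_sum. apply sum_eq. intros k _.
      unfold A. rewrite hyp2_formula.
      destruct m as [|p]; [lia|]. replace (S p - 1)%nat with p by lia.
      pose proof (INRS_ge1 k).
      assert (INR (S k) ^ p <> 0) by (apply pow_nonzero; lra).
      change (INR (S k) ^ S p) with (INR (S k) * INR (S k) ^ p). field. split; lra. }
    intros e he. destruct (CV_minus _ _ _ _ (CV_plus _ _ _ _ HzH1 HzH0) Hz1 e he) as [N HN].
    exists N; intros n hn. rewrite E. apply HN, hn. }
  assert (Hsc : forall N, sum_f_R0 (fun k => / INR (S k) ^ m) N = sum1 g (S N)).
  { intro N. apply (sum_f_sum1 g). }
  assert (Hg0 : forall j, 0 <= g (S j)).
  { intro j. unfold g. left; apply Rinv_0_lt_compat, pow_lt. pose proof (INRS_ge1 j); lra. }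
  assert (Hle : forall N, sum1 g (S N) <= z).
  { intro N. rewrite <- Hsc. apply sum_incr; [exact Hz|]. intro n. apply Hg0. }
  exists S0, (fun n => z - sum1 g (pred n)), zH1, zH0, z1.
  split; [|split; [|split; [|split; [exact HzH1|split; [exact HzH0|split; [exact Hz1|reflexivity]]]]]].
  -
    intros n hn. destruct n as [|p]; [lia|]. simpl pred.
    intros e he. destruct (Hz e he) as [N HN]. exists N. intros k hk.
    assert (Ek : sum_f_R0 (fun j => / (INR j + INR (S p)) ^ m) k
               = sum1 g (S k + p) - sum1 g p).
    { rewrite <- sum_shift. apply sum_eq. intros i _. unfold g. rewrite plus_INR. reflexivity. }
    rewrite Ek. specialize (HN (k + p)%nat ltac:(lia)). rewrite Hsc in HN.
    unfold Rdist in *. replace (S k + p)%nat with (S (k+p)) by lia.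
    replace (sum1 g (S (k + p)) - sum1 g p - (z - sum1 g p)) with (sum1 g (S (k+p)) - z) by ring.
    exact HN.
  - exact HQ.
  -
    assert (Id : forall N, sum_f_R0 (fun k => harmonic (S k) * (z - sum1 g (pred (S k)))) N
                 = Q N + A (S N) * (z - sum1 g (S N))).
    { induction N.
      - unfold Q, A. simpl sum_f_R0. simpl pred. rewrite hyp2_S.
        change (sum1 g 1%nat) with (0 + g 1%nat). change (sum1 g 0%nat) with 0.
        unfold g. change (hyperharmonic 2 0%nat) with 0. unfold Rdiv. unfold harmonic; cbn [sum1]. change (INR 1%nat) with 1. rewrite pow1, !Rinv_1. ring.
      - rewrite tech5, IHN. unfold Q. rewrite tech5. fold Q. unfold A. rewrite (hyp2_S (S N)).
        simpl pred. change (sum1 g (S (S N))) with (sum1 g (S N) + g (S (S N))).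
        unfold g. unfold Rdiv. ring. }
    assert (Ebound : forall N, A (S N) * (z - sum1 g (S N)) <= S0 - Q N).
    { intro N.
      apply (lim_le (fun M => A (S N) * (sum1 g (S M) - sum1 g (S N))) (fun M => Q M - Q N)
               _ _ N).
      - apply CV_mult; [apply cv_const|]. apply CV_minus; [|apply cv_const].
        intros e he. destruct (Hz e he) as [K HK]. exists K. intros n hn. rewrite <- Hsc. apply HK, hn.
      - apply CV_minus; [exact HQ|apply cv_const].
      - intros M hM. replace M with (N + (M - N))%nat by lia.
        generalize (M - N)%nat. intro d. induction d.
        + rewrite Nat.add_0_r. lra.
        + replace (N + S d)%nat with (S (N + d)) by lia.
          unfold Q in *. rewrite tech5.
          change (sum1 g (S (S (N + d)))) with (sum1 g (S (N + d)) + g (S (S (N + d)))).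
          assert (A (S N) * g (S (S (N + d))) <= A (S (S (N + d))) / INR (S (S (N + d))) ^ m).
          { unfold Rdiv. apply Rmult_le_compat_r; [apply Hg0|].
            unfold A. replace (S (S (N + d))) with (S N + S d)%nat by lia. apply hyp2_mono. }
          lra. }
    assert (Epos : forall N, 0 <= A (S N) * (z - sum1 g (S N))).
    { intro N. apply Rmult_le_pos; [apply hyp2_ge0|]. pose proof (Hle N); lra. }
    intros e he. destruct (HQ e he) as [N HN]. exists N. intros n hn.
    rewrite Id. specialize (HN n hn). specialize (Ebound n). specialize (Epos n).
    unfold Rdist in *. apply Rabs_def2 in HN. apply Rabs_def1; lra.
Qed.
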